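(* Let $\phi:\mathbb{R}^n\to\mathbb{R}\cup\{+\infty\}$ be proper, lsc and convex, and $\mu=\mu(\phi)$. Let $(x^-,\chi,\varepsilon)\in\mathrm{dom}\,\phi\times[0,1)\times\mathbb{R}_{++}$ and let $(x,y,\Gamma,\lambda)\in\mathrm{dom}\,\phi\times\mathrm{dom}\,\phi\times\{\text{proper lsc convex functions}\}\times\mathbb{R}_{++}$ satisfy $\Gamma\le\phi$, \[ \phi(y)+\frac{\chi}{2\lambda}\|y-x^-\|^2-\min_{u\in\mathbb{R}^n}\left\{\Gamma(u)+\frac1{2\lambda}\|u-x^-\|^2\right\}\le\varepsilon,\qquad x=\mathrm{argmin}_{u\in\mathbb{R}^n}\left\{\Gamma(u)+\frac1{2\lambda}\|u-x^-\|^2\right\}. \] Assume further that $\Gamma$ is $\nu$-convex for some $\nu\in[0,\mu]$. Then for every $u\in\mathbb{R}^n$, \[ 2\lambda[\phi(y)-\phi(u)]\le\frac{2\lambda\varepsilon}{1-\chi}+\|x^--u\|^2-(1+\sigma)\|x-u\|^2,\qquad \sigma:=\frac{\lambda[\nu(1+\mu\lambda)+\chi(\mu-\nu)]}{1+\mu\lambda+\chi\lambda(\nu-\mu)}. \]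
   Context: For a proper convex function $\psi$, $\mu(\psi)$ is the largest $\mu\ge0$ such that $\psi-\frac\mu2\|\cdot\|^2$ is convex. A function $\Gamma$ is $\nu$-convex if $\Gamma(\alpha a+(1-\alpha)b)\le\alpha\Gamma(a)+(1-\alpha)\Gamma(b)-\frac{\alpha(1-\alpha)\nu}{2}\|a-b\|^2$ for all $a,b\in\mathrm{dom}\,\Gamma$, $\alpha\in[0,1]$. *)

(* Defs.v *)
From HB Require Import structures.
From mathcomp Require Import all_boot all_order all_algebra.
From mathcomp Require Import all_classical all_reals all_analysis.
Set Implicit Arguments. Unset Strict Implicit. Unset Printing Implicit Defensive.
Import Order.TTheory GRing.Theory Num.Theory.
Import numFieldNormedType.Exports.
Local Open Scope classical_set_scope.
Local Open Scope ring_scope.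

(* Vectors of R^n are row vectors 'rV[R]_n (the topology on 'rV[R]_n is the
   product topology, i.e. the Euclidean one). *)

Definition sqnorm (R : realType) (n : nat) (v : 'rV[R]_n) : R :=
  \sum_(i < n) (v ord0 i) ^+ 2.

Definition edom (R : realType) (n : nat) (f : 'rV[R]_n -> \bar R) :=
  [set x | (f x < +oo)%E].

Definition proper_fun (R : realType) (n : nat) (f : 'rV[R]_n -> \bar R) : Prop :=
  (forall x, (-oo < f x)%E) /\ (exists x, (f x < +oo)%E).

Definition lsc_fun (R : realType) (n : nat) (f : 'rV[R]_n -> \bar R) : Prop :=
  forall t : R, closed [set x | (f x <= t%:E)%E].

Definition nu_convex (R : realType) (n : nat) (nu : R) (f : 'rV[R]_n -> \bar R) : Prop :=
  forall a b (al : R), edom f a -> edom f b -> 0 <= al <= 1 ->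
    (f (al *: a + (1 - al) *: b)%R
     <= al%:E * f a + (1 - al)%:E * f b
        - (al * (1 - al) * nu / 2 * sqnorm (a - b))%:E)%E.

Definition convex_fun (R : realType) (n : nat) (f : 'rV[R]_n -> \bar R) : Prop :=
  nu_convex 0 f.

Definition closed_convex_proper (R : realType) (n : nat) (f : 'rV[R]_n -> \bar R) : Prop :=
  [/\ proper_fun f, lsc_fun f & convex_fun f].

Definition sub_quad (R : realType) (n : nat) (m : R) (f : 'rV[R]_n -> \bar R) :=
  fun x => (f x - (m / 2 * sqnorm x)%:E)%E.

Definition is_mu (R : realType) (n : nat) (psi : 'rV[R]_n -> \bar R) (mu : R) : Prop :=
  [/\ 0 <= mu, convex_fun (sub_quad mu psi)
    & forall m : R, 0 <= m -> convex_fun (sub_quad m psi) -> m <= mu].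

Definition prox_obj (R : realType) (n : nat) (Gamma : 'rV[R]_n -> \bar R)
  (lam : R) (xm : 'rV[R]_n) : 'rV[R]_n -> \bar R :=
  fun u => (Gamma u + (1 / (2 * lam) * sqnorm (u - xm))%:E)%E.

Definition is_argmin (R : realType) (n : nat) (f : 'rV[R]_n -> \bar R) (x : 'rV[R]_n) : Prop :=
  (forall u, (f x <= f u)%E) /\ (forall u, (f u <= f x)%E -> u = x).

(* Main.v *)
Require Import Defs.
From HB Require Import structures.
From mathcomp Require Import all_boot all_order all_algebra.
From mathcomp Require Import all_classical all_reals all_analysis.
From mathcomp Require Import ring lra.
Import Order.TTheory GRing.Theory Num.Theory.
Import numFieldNormedType.Exports.
Local Open Scope classical_set_scope.
Local Open Scope ring_scope.

Definition dotv {R : realType} {n : nat} (v w : 'rV[R]_n) : R :=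
  \sum_(i < n) v ord0 i * w ord0 i.

Lemma sqnorm_comb {R : realType} {n : nat} (a b : R) (P Q : 'rV[R]_n) :
  sqnorm (a *: P + b *: Q) =
  a ^+ 2 * sqnorm P + 2 * a * b * dotv P Q + b ^+ 2 * sqnorm Q.
Proof.
rewrite /sqnorm /dotv !mulr_sumr -!big_split /=.
by apply: eq_bigr => i _; rewrite !mxE; ring.
Qed.

Lemma sqnorm_ge0 {R : realType} {n : nat} (P : 'rV[R]_n) : 0 <= sqnorm P.
Proof. by apply: sumr_ge0 => i _; apply: sqr_ge0. Qed.

Lemma fin_of {R : realType} {e : \bar R} :
  (-oo < e)%E -> (e < +oo)%E -> exists r : R, e = r%:E.
Proof. by case: e => // r _ _; exists r. Qed.

Lemma lim0 {R : realType} (a b : R) : 0 <= b ->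
  (forall t, 0 < t <= 1 -> 0 <= a + t * b) -> 0 <= a.
Proof.
move=> hb h; have [//|ha] := leP 0 a.
have hba : 0 < b - a by lra.
set t := - a / (2 * (b - a)).
have ht0 : 0 < t by rewrite /t divr_gt0 //; lra.
have ht1 : t <= 1 by rewrite /t ler_pdivrMr; lra.
have := h t; rewrite ht0 ht1 => /(_ isT).
have e : (2 * (b - a)) * (a + t * b) = a * (b - 2 * a).
  rewrite /t; field; lra.
move=> H.
have : 0 <= (2 * (b - a)) * (a + t * b) by apply: mulr_ge0; lra.
rewrite e; nra.
Qed.

Lemma prox_strong (R : realType) (n : nat) (G : 'rV[R]_n -> \bar R) (lam nu : R)
  (xm x v : 'rV[R]_n) (gx gv : R) :
  0 < lam -> 0 <= nu -> (forall z, (-oo < G z)%E) -> nu_convex nu G ->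
  (forall z, (prox_obj G lam xm x <= prox_obj G lam xm z)%E) ->
  G x = gx%:E -> G v = gv%:E ->
  gx + 1 / (2 * lam) * sqnorm (x - xm) + (nu + 1 / lam) / 2 * sqnorm (v - x)
  <= gv + 1 / (2 * lam) * sqnorm (v - xm).
Proof.
move=> hl hnu hG hconv hmin Gx Gv.
set P := v - x; set Q := x - xm; set d := dotv P Q.
have hP := sqnorm_ge0 P.
have key : forall t, 0 < t <= 1 ->
  0 <= (gv - gx + d / lam - nu / 2 * sqnorm P)
       + t * (sqnorm P / (2 * lam) + nu / 2 * sqnorm P).
  move=> t /andP[t0 t1].
  have hz := hconv v x t.
  rewrite /edom /= Gv Gx in hz.
  have := hz (ltry _) (ltry _); rewrite (ltW t0) t1 => /(_ isT) {}hz.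
  rewrite -!EFinM -EFinD in hz.
  have [gz Ez] := fin_of (hG (t *: v + (1 - t) *: x)) (le_lt_trans hz (ltry _)).
  rewrite Ez lee_fin in hz.
  have ho := hmin (t *: v + (1 - t) *: x).
  rewrite /prox_obj Gx Ez -!EFinD lee_fin in ho.
  have ez : t *: v + (1 - t) *: x - xm = t *: P + 1 *: Q.
    by apply/rowP => i; rewrite /P /Q !mxE; ring.
  rewrite ez sqnorm_comb -/d in ho.
  rewrite -/P in hz.
  have e : t * ((gv - gx + d / lam - nu / 2 * sqnorm P)
       + t * (sqnorm P / (2 * lam) + nu / 2 * sqnorm P)) =
    (gz + 1 / (2 * lam) * (t ^+ 2 * sqnorm P + 2 * t * 1 * d + 1 ^+ 2 * sqnorm Q)
      - (gx + 1 / (2 * lam) * sqnorm Q))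
    + (t * gv + (1 - t) * gx - t * (1 - t) * nu / 2 * sqnorm P - gz).
    field; lra.
  have : 0 <= t * ((gv - gx + d / lam - nu / 2 * sqnorm P)
       + t * (sqnorm P / (2 * lam) + nu / 2 * sqnorm P)).
    by rewrite e; apply: addr_ge0; rewrite subr_ge0.
  by rewrite pmulr_rge0.
have hb : 0 <= sqnorm P / (2 * lam) + nu / 2 * sqnorm P.
  apply: addr_ge0; first by apply: divr_ge0 => //; lra.
  by apply: mulr_ge0 => //; apply: divr_ge0 => //; lra.
have H := lim0 _ _ hb key.
have -> : v - xm = 1 *: P + 1 *: Q by apply/rowP => i; rewrite /P /Q !mxE; ring.
rewrite sqnorm_comb -/d.
rewrite -subr_ge0.
have -> : gv + 1 / (2 * lam) * (1 ^+ 2 * sqnorm P + 2 * 1 * 1 * d + 1 ^+ 2 * sqnorm Q) -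
  (gx + 1 / (2 * lam) * sqnorm Q + (nu + 1 / lam) / 2 * sqnorm P) =
  gv - gx + d / lam - nu / 2 * sqnorm P by field; lra.
exact: H.
Qed.


Lemma combine4 {R : realType} (k c G F L1 R1 L2 R2 L3 R3 L4 R4 : R) :
  0 < k -> 0 <= c -> L1 <= R1 -> L2 <= R2 -> L3 <= R3 -> L4 <= R4 -> 0 <= F ->
  k * G = c * ((R1 - L1) + (R2 - L2) + (R3 - L3) + (R4 - L4)) + F -> 0 <= G.
Proof.
move=> k0 c0 h1 h2 h3 h4 hF e.
have : 0 <= k * G.
  rewrite e; apply: addr_ge0 => //; apply: mulr_ge0 => //.
  lra.
by rewrite pmulr_rge0.
Qed.

Lemma quad_nonneg {R : realType} {n : nat} (A B C : R) (Y X : 'rV[R]_n) :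
  0 < A -> A * C = B ^+ 2 ->
  0 <= A * sqnorm Y - 2 * B * dotv Y X + C * sqnorm X.
Proof.
move=> A0 hAC.
have := sqnorm_ge0 (A *: Y + (- B) *: X); rewrite sqnorm_comb.
have -> : A ^+ 2 * sqnorm Y + 2 * A * - B * dotv Y X + (- B) ^+ 2 * sqnorm X
  = A * (A * sqnorm Y - 2 * B * dotv Y X + C * sqnorm X).
  transitivity (A ^+ 2 * sqnorm Y + 2 * A * - B * dotv Y X + (A * C) * sqnorm X).
    by rewrite hAC sqrrN.
  ring.
by rewrite pmulr_rge0.
Qed.

Theorem proposition3p1 (R : realType) (n : nat)
  (phi : 'rV[R]_n -> \bar R) (mu : R)
  (xm : 'rV[R]_n) (chi eps : R)
  (x y : 'rV[R]_n) (Gamma : 'rV[R]_n -> \bar R) (lam nu : R) :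
  closed_convex_proper phi ->
  is_mu phi mu ->
  edom phi xm -> 0 <= chi < 1 -> 0 < eps ->
  edom phi x -> edom phi y -> closed_convex_proper Gamma -> 0 < lam ->
  (forall u, (Gamma u <= phi u)%E) ->
  is_argmin (prox_obj Gamma lam xm) x ->
  (phi y + (chi / (2 * lam) * sqnorm (y - xm))%:E - prox_obj Gamma lam xm x
     <= eps%:E)%E ->
  0 <= nu <= mu -> nu_convex nu Gamma ->
  let sigma := lam * (nu * (1 + mu * lam) + chi * (mu - nu))
               / (1 + mu * lam + chi * lam * (nu - mu)) in
  forall u : 'rV[R]_n,
    ((2 * lam)%:E * (phi y - phi u)
     <= (2 * lam * eps / (1 - chi) + sqnorm (xm - u)
         - (1 + sigma) * sqnorm (x - u))%:E)%E.
Proof.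
move=> [[phiP _] _ _] [mu0 phiconv _] hxm /andP[c0 c1] he hx hy
  [[GP _] _ _] hl hGp [amin _] hineq /andP[nu0 numu] hnuc sigma u.
have [py Ey] := fin_of (phiP y) hy.
case Eu: (phi u) => [pu| |]; last by have := phiP u; rewrite Eu.
  2: by rewrite Ey /= gt0_muleNy ?leNye // lte_fin; lra.
have [gx Egx] := fin_of (GP x) (le_lt_trans (hGp x) hx).
set w := chi *: y + (1 - chi) *: u.
have hdy : edom (sub_quad mu phi) y by rewrite /edom /sub_quad /= Ey -EFinB ltry.
have hdu : edom (sub_quad mu phi) u by rewrite /edom /sub_quad /= Eu -EFinB ltry.
have hc01 : 0 <= chi <= 1 by rewrite c0 ltW.
have hw := phiconv y u chi hdy hdu hc01.
rewrite /sub_quad Ey Eu -?EFinB -?EFinM -?EFinD -?EFinB -/w in hw.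
case Ew: (phi w) hw => [pw| |] hw; last by have := phiP w; rewrite Ew.
  2: by move: hw; rewrite /= leye_eq.
rewrite -EFinB lee_fin in hw.
have hwf : (phi w < +oo)%E by rewrite Ew ltry.
have [gw Egw] := fin_of (GP w) (le_lt_trans (hGp w) hwf).
have hgw : gw <= pw by rewrite -lee_fin -Egw -Ew.
have hc := @prox_strong _ _ _ _ _ _ _ _ _ _ hl nu0 GP hnuc amin Egx Egw.
rewrite Ey /prox_obj Egx -?EFinD -?EFinB -?EFinD lee_fin in hineq.
rewrite Ey -?EFinB -?EFinM lee_fin.
set Y := y - u; set X := x - u; set M := xm - u.
have e1 : sqnorm (x - xm) = sqnorm (1 *: X + (-1) *: M).
  by congr sqnorm; apply/rowP => i; rewrite /X /M !mxE; ring.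
have e2 : sqnorm (w - x) = sqnorm (chi *: Y + (-1) *: X).
  by congr sqnorm; apply/rowP => i; rewrite /w /X /Y !mxE; ring.
have e3 : sqnorm (w - xm) = sqnorm (chi *: Y + (-1) *: M).
  by congr sqnorm; apply/rowP => i; rewrite /w /M /Y !mxE; ring.
have e4 : sqnorm (y - xm) = sqnorm (1 *: Y + (-1) *: M).
  by congr sqnorm; apply/rowP => i; rewrite /M /Y !mxE; ring.
have e5 : sqnorm w = sqnorm (chi *: Y + 1 *: u).
  by congr sqnorm; apply/rowP => i; rewrite /w /Y !mxE; ring.
have e6 : sqnorm y = sqnorm (1 *: Y + 1 *: u).
  by congr sqnorm; apply/rowP => i; rewrite /Y !mxE; ring.
rewrite e1 e2 e3 !sqnorm_comb in hc.
rewrite e1 e4 !sqnorm_comb in hineq.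
rewrite e5 e6 !sqnorm_comb in hw.
have E0 : 0 < 1 + mu * lam + chi * lam * (nu - mu).
  have -> : 1 + mu * lam + chi * lam * (nu - mu) =
    1 + mu * lam * (1 - chi) + chi * lam * nu by ring.
  have h1 : 0 <= mu * lam * (1 - chi) by rewrite !mulr_ge0 //; lra.
  have h2 : 0 <= chi * lam * nu by rewrite !mulr_ge0 //; lra.
  lra.
rewrite -subr_ge0.
apply: (@combine4 _ (1 - chi) (2 * lam) _ (chi * (1 + mu * lam + chi * lam * (nu - mu)) * sqnorm Y
   - 2 * ((1 + nu * lam) * chi) * dotv Y X
   + (1 + nu * lam - (1 - chi) * (1 + sigma)) * sqnorm X) _ _ _ _ _ _ _ _ _ _ hc hineq hgw hw).
- lra.
- lra.
- have [cz|cpos] : chi = 0 \/ 0 < chi.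
    by move: c0; rewrite le_eqVlt => /orP[/eqP<-|->]; [left|right].
  + rewrite /sigma cz.
    set F := (X in 0 <= X).
    have -> : F = 0 by rewrite /F; field; rewrite cz in E0; lra.
    by [].
  + apply: quad_nonneg; first by apply: mulr_gt0.
    rewrite /sigma; field; lra.
- rewrite /sigma; field.
  have hc1 : 0 < 1 - chi by lra.
  by rewrite (gt_eqF E0) (gt_eqF hl) (gt_eqF hc1).
Qed.
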